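(* Assume $z_1-z_2+z_3-z_4=0$. Then for each phase $\ell\in\{w,\textit{nw}\}$, each $k\in\{1,\dots,4\}$ and each $j\in\{1,\dots,4\}$ with $j\ne k$, $$\frac{\partial\big(\overline{G}_{\ell,k+1/2}-\overline{G}_{\ell,k-1/2}\big)}{\partial S_{\ell,j}}\le0 .$$
   Context: An interaction region has four vertices labeled $k\in\{1,2,3,4\}$ counterclockwise; indices are cyclic mod 4. Vertex $k$ has depth $z_k\in\mathbb{R}$ and wetting saturation $S_k$; $S_{w,k}=S_k$, $S_{\textit{nw},k}=1-S_k$, so $\partial/\partial S_{\textit{nw},j}=-\partial/\partial S_j$. Half-interface $k+1/2$ joins vertices $k$ and $k+1$, with transmissibility $\overline{T}_{k+1/2}>0$ and $\overline{\Delta z}_{k+1/2}=z_{k+1}-z_k$. Two phases $w,\textit{nw}$ with constant densities $\rho_w,\rho_{\textit{nw}}$; $g>0$. Mobilities $\lambda_w,\lambda_{\textit{nw}}$ are positive differentiable functions of $S$, $\lambda_w$ nondecreasing and $\lambda_{\textit{nw}}$ nonincreasing in $S$; $\lambda_{\ell,k}=\lambda_\ell(S_k)$. $H(a,b)=ab/(a+b)$. Limiter $\varphi(r)=\dfrac{r^4+r^3+r^2+r}{r^4+r^3+r^2+r+1}$, $r\ge0$. Weights: $\overline{\omega}^G_{k+1/2}=\varphi\big(\overline{T}_{k+3/2}\overline{\Delta z}_{k+3/2}/(\overline{T}_{k+1/2}\overline{\Delta z}_{k+1/2})\big)$ if $\overline{\Delta z}_{k+1/2}\overline{\Delta z}_{k+3/2}>0$;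 $=\varphi\big(\overline{T}_{k-1/2}\overline{\Delta z}_{k-1/2}/(\overline{T}_{k+1/2}\overline{\Delta z}_{k+1/2})\big)$ if $\overline{\Delta z}_{k+1/2}\overline{\Delta z}_{k-1/2}>0$; $=0$ otherwise. For an ordered pair $(\ell,m)$ of the two distinct phases with $(\rho_\ell-\rho_m)\overline{\Delta z}_{k+1/2}>0$, writing $\omega=\overline{\omega}^G_{k+1/2}$: $\overline{\psi}_{\ell,m,k+1/2}=(1-\omega)H(\lambda_{\ell,k},\lambda_{m,k+1})+\omega H(\lambda_{\ell,k},\lambda_{m,k+2})$ if $\overline{\Delta z}_{k+1/2}\overline{\Delta z}_{k+3/2}>0$; $=(1-\omega)H(\lambda_{\ell,k},\lambda_{m,k+1})+\omega H(\lambda_{\ell,k-1},\lambda_{m,k+1})$ if $\overline{\Delta z}_{k+1/2}\overline{\Delta z}_{k-1/2}>0$; $=H(\lambda_{\ell,k},\lambda_{m,k+1})$ otherwise. If $(\rho_\ell-\rho_m)\overline{\Delta z}_{k+1/2}<0$, $\overline{\psi}_{\ell,m,k+1/2}$ is given by the same formulas with $\ell$ and $m$ interchanged; if $(\rho_\ell-\rho_m)\overline{\Delta z}_{k+1/2}=0$, set $\overline{\psi}_{\ell,m,k+1/2}=0$. Buoyancy flux of phase $\ell$ at half-interface $k+1/2$: $\overline{G}_{\ell,k+1/2}=\overline{T}_{k+1/2}\,\overline{\psi}_{\ell,m,k+1/2}\,(\rho_\ell-\rho_m)\,g\,\overline{\Delta z}_{k+1/2}$, where $m$ is the other phase. *)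

(* Defs.v *)
From Stdlib Require Import Reals Lra Lia Arith.
Open Scope R_scope.

(* Vertices are indexed 0..3 (paper's vertex k+1 is our k); indices cyclic mod 4.
   Half-interface k+1/2 (joining vertices k, k+1) is indexed by k;
   half-interface k-1/2 is therefore index k+3 (mod 4). *)
Definition vx (k : nat) : nat := Nat.modulo k 4.

Inductive phase : Set := w | nw.
Definition other (l : phase) : phase := match l with w => nw | nw => w end.

Definition Hm (a b : R) : R := a * b / (a + b).

Definition phi (r : R) : R :=
  (r^4 + r^3 + r^2 + r) / (r^4 + r^3 + r^2 + r + 1).

Section Defs.
Variables (z : nat -> R) (T : nat -> R).
(* z k : depth of vertex k ; T k : transmissibility of half-interface k+1/2 *)

Definition dz (k : nat) : R := z (vx (k + 1)) - z (vx k).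
Definition Tb (k : nat) : R := T (vx k).

Definition omegaG (k : nat) : R :=
  if Rlt_dec 0 (dz k * dz (k + 1)) then
    phi (Tb (k + 1) * dz (k + 1) / (Tb k * dz k))
  else if Rlt_dec 0 (dz k * dz (k + 3)) then
    phi (Tb (k + 3) * dz (k + 3) / (Tb k * dz k))
  else 0.

Variables (rho : phase -> R) (g : R) (lam : phase -> R -> R) (S : nat -> R).
(* lam l s : mobility of phase l at wetting saturation s;
   lambda_{l,k} = lam l (S k) *)
Definition lamv (l : phase) (k : nat) : R := lam l (S (vx k)).

Definition psi_base (a b : phase) (k : nat) : R :=
  let om := omegaG k in
  if Rlt_dec 0 (dz k * dz (k + 1)) then
    (1 - om) * Hm (lamv a k) (lamv b (k + 1)) + om * Hm (lamv a k) (lamv b (k + 2))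
  else if Rlt_dec 0 (dz k * dz (k + 3)) then
    (1 - om) * Hm (lamv a k) (lamv b (k + 1)) + om * Hm (lamv a (k + 3)) (lamv b (k + 1))
  else Hm (lamv a k) (lamv b (k + 1)).

Definition psi (l m : phase) (k : nat) : R :=
  if Rlt_dec 0 ((rho l - rho m) * dz k) then psi_base l m k
  else if Rlt_dec ((rho l - rho m) * dz k) 0 then psi_base m l k
  else 0.

Definition Gflux (l : phase) (k : nat) : R :=
  Tb k * psi l (other l) k * (rho l - rho (other l)) * g * dz k.

Definition Gdiff (l : phase) (k : nat) : R := Gflux l k - Gflux l (k + 3).

End Defs.

Definition upd (S : nat -> R) (j : nat) (t : R) : nat -> R :=
  fun i => if Nat.eqb i j then t else S i.

(* phase-l saturation from wetting saturation (an involution):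
   S_w = S, S_nw = 1 - S *)
Definition satl (l : phase) (s : R) : R :=
  match l with w => s | nw => 1 - s end.

(* Main.v *)
Require Import Defs.
From Stdlib Require Import Reals Lra Lia Arith.
Open Scope R_scope.

Lemma dconst (c : R) : derivable (fun _ : R => c).
Proof. exact (derivable_const c). Qed.
Lemma dplus f g : derivable f -> derivable g -> derivable (fun u => f u + g u).
Proof. intros; exact (derivable_plus f g H H0). Qed.
Lemma dminus f g : derivable f -> derivable g -> derivable (fun u => f u - g u).
Proof. intros; exact (derivable_minus f g H H0). Qed.
Lemma dmult f g : derivable f -> derivable g -> derivable (fun u => f u * g u).
Proof. intros; exact (derivable_mult f g H H0). Qed.
Lemma dHm f g : derivable f -> derivable g -> (forall u, 0 < f u) -> (forall u, 0 < g u) ->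
  derivable (fun u => Hm (f u) (g u)).
Proof.
  intros Hf Hg Pf Pg. unfold Hm.
  apply (derivable_div (mult_fct f g) (plus_fct f g)).
  - apply derivable_mult; auto.
  - apply derivable_plus; auto.
  - intro x; unfold plus_fct; specialize (Pf x); specialize (Pg x); lra.
Qed.

Lemma vx_lt n : (vx n < 4)%nat.
Proof. unfold vx; apply Nat.mod_upper_bound; lia. Qed.
Lemma vx4 n : vx (n + 4) = vx n.
Proof. unfold vx. replace (n+4)%nat with (n + 1*4)%nat by lia. apply Nat.Div0.mod_add. Qed.
Lemma vx_small n : (n < 4)%nat -> vx n = n.
Proof. intro; unfold vx; apply Nat.mod_small; auto. Qed.
Lemma dz4 z n : dz z (n + 4) = dz z n.
Proof. unfold dz. replace (n+4+1)%nat with (n+1+4)%nat by lia. rewrite !vx4; auto. Qed.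
Lemma Tb4 T n : Tb T (n + 4) = Tb T n.
Proof. unfold Tb; rewrite vx4; auto. Qed.
Lemma lamv4 lam S p n : lamv lam S p (n + 4) = lamv lam S p n.
Proof. unfold lamv; rewrite vx4; auto. Qed.
Lemma Tb_pos T n : (forall k, (k < 4)%nat -> 0 < T k) -> 0 < Tb T n.
Proof. intro H; unfold Tb; apply H, vx_lt. Qed.

Lemma Hm_mono a b a' b' : 0 < a -> 0 < b -> a <= a' -> b <= b' -> Hm a b <= Hm a' b'.
Proof.
  intros. unfold Hm.
  replace (a*b/(a+b)) with (/ (/a + /b)) by (field; lra).
  replace (a'*b'/(a'+b')) with (/ (/a' + /b')) by (field; lra).
  apply Rinv_le_contravar.
  - assert (0 < /a') by (apply Rinv_0_lt_compat; lra).
    assert (0 < /b') by (apply Rinv_0_lt_compat; lra). lra.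
  - apply Rplus_le_compat; apply Rinv_le_contravar; lra.
Qed.

Lemma phi_range r : 0 < r -> 0 <= phi r <= 1.
Proof.
  intro Hr. unfold phi.
  assert (HN : 0 < r^4 + r^3 + r^2 + r) by
   (assert (0 < r^4) by (apply pow_lt; lra);
    assert (0 < r^3) by (apply pow_lt; lra);
    assert (0 < r^2) by (apply pow_lt; lra); lra).
  set (N := r^4 + r^3 + r^2 + r) in *.
  split.
  - apply Rlt_le, Rdiv_lt_0_compat; lra.
  - apply (Rmult_le_reg_r (N+1)); [lra|].
    unfold Rdiv. rewrite Rmult_assoc, Rinv_l by lra. lra.
Qed.

Lemma phi_sym A B : 0 < A * B -> A * phi (B / A) = B * phi (A / B).
Proof.
  intro H.
  assert (A <> 0) by (intro E; rewrite E in H; lra).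
  assert (B <> 0) by (intro E; rewrite E in H; lra).
  unfold phi. field. split; [auto|split;[|auto]].
  assert (0 < A*A) by nra. assert (0 < B*B) by nra.
  assert (0 < A^4) by (replace (A^4) with ((A*A)*(A*A)) by ring; nra).
  assert (0 < A^3*B) by (replace (A^3*B) with ((A*A)*(A*B)) by ring; nra).
  assert (0 < (A*B)^2) by (replace ((A*B)^2) with ((A*B)*(A*B)) by ring; nra).
  assert (0 < A*(B*(B*B))) by (replace (A*(B*(B*B))) with ((A*B)*(B*B)) by ring; nra).
  assert (0 < B*(B*B)*B) by nra.
  lra.
Qed.

Lemma ratio_pos ta tb a b : 0 < ta -> 0 < tb -> 0 < a * b -> 0 < tb * b / (ta * a).
Proof.
  intros.
  assert (a <> 0) by (intro E; rewrite E in H1; lra).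
  replace (tb*b/(ta*a)) with ((tb*(a*b))/(ta*(a*a))) by (field; repeat split; try lra; auto).
  assert (0 < a*a) by (destruct (Rlt_dec 0 a); nra).
  apply Rdiv_lt_0_compat; apply Rmult_lt_0_compat; auto.
Qed.

Lemma om_range z T n : (forall k, (k < 4)%nat -> 0 < T k) -> 0 <= omegaG z T n <= 1.
Proof.
  intro HT. unfold omegaG.
  destruct (Rlt_dec 0 (dz z n * dz z (n+1))).
  - apply phi_range, ratio_pos; try apply Tb_pos; auto.
  - destruct (Rlt_dec 0 (dz z n * dz z (n+3))).
    + apply phi_range, ratio_pos; try apply Tb_pos; auto.
    + lra.
Qed.

Lemma dlam (lam : phase -> R -> R) S j l ph i :
  (forall p, derivable (lam p)) ->
  derivable (fun u => lamv lam (upd S j (satl l u)) ph i).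
Proof.
  intro Hd. unfold lamv, upd.
  destruct (Nat.eqb (vx i) j).
  - destruct l; simpl.
    + apply Hd.
    + apply (derivable_comp (fun u => 1 - u) (lam ph)).
      * apply (dminus (fun _ => 1) (fun u => u)); [apply dconst | apply derivable_id].
      * apply Hd.
  - apply dconst.
Qed.

Lemma deriv_all z T rho g (lam : phase -> R -> R) S j l k :
  (forall p, derivable (lam p)) -> (forall p s, 0 < lam p s) ->
  derivable (fun u => Gdiff z T rho g lam (upd S j (satl l u)) l k).
Proof.
  intros Hd Hp.
  unfold Gdiff, Gflux, psi, psi_base. cbv zeta.
  repeat match goal with |- context [Rlt_dec ?a ?b] => destruct (Rlt_dec a b) end;
  repeat (first [ apply dconst | apply dHm | apply dminus | apply dplus | apply dmult
                | apply dlam; exact Hd | intro; unfold lamv; apply Hp ]).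
Qed.

Section Mono.
Variables (z T : nat -> R) (lam : phase -> R -> R).
Hypothesis HT : forall k, (k < 4)%nat -> 0 < T k.
Hypothesis Hp : forall p s, 0 < lam p s.

Lemma lamv_pos S p i : 0 < lamv lam S p i.
Proof. unfold lamv; apply Hp. Qed.

Lemma pb_mono_snd S1 S2 a b n :
  ~ (0 < dz z n * dz z (n+3)) -> S1 (vx n) = S2 (vx n) ->
  (forall i, lamv lam S1 b i <= lamv lam S2 b i) ->
  psi_base z T lam S1 a b n <= psi_base z T lam S2 a b n.
Proof.
  intros Hn Hf Hb.
  assert (E : lamv lam S1 a n = lamv lam S2 a n) by (unfold lamv; rewrite Hf; auto).
  unfold psi_base; cbv zeta. rewrite E.
  pose proof (om_range z T n HT).
  destruct (Rlt_dec 0 (dz z n * dz z (n+1))).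
  - assert (Hm (lamv lam S2 a n) (lamv lam S1 b (n+1)) <= Hm (lamv lam S2 a n) (lamv lam S2 b (n+1)))
      by (apply Hm_mono; auto using lamv_pos; lra).
    assert (Hm (lamv lam S2 a n) (lamv lam S1 b (n+2)) <= Hm (lamv lam S2 a n) (lamv lam S2 b (n+2)))
      by (apply Hm_mono; auto using lamv_pos; lra).
    apply Rplus_le_compat; apply Rmult_le_compat_l; lra.
  - destruct (Rlt_dec 0 (dz z n * dz z (n+3))); [contradiction|].
    apply Hm_mono; auto using lamv_pos; lra.
Qed.

Lemma pb_mono_fst S1 S2 a b n :
  ~ (0 < dz z n * dz z (n+1)) -> S1 (vx (n+1)) = S2 (vx (n+1)) ->
  (forall i, lamv lam S1 a i <= lamv lam S2 a i) ->
  psi_base z T lam S1 a b n <= psi_base z T lam S2 a b n.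
Proof.
  intros Hn Hf Ha.
  assert (E : lamv lam S1 b (n+1) = lamv lam S2 b (n+1)) by (unfold lamv; rewrite Hf; auto).
  unfold psi_base; cbv zeta. rewrite E.
  pose proof (om_range z T n HT).
  destruct (Rlt_dec 0 (dz z n * dz z (n+1))); [contradiction|].
  destruct (Rlt_dec 0 (dz z n * dz z (n+3))).
  - assert (Hm (lamv lam S1 a n) (lamv lam S2 b (n+1)) <= Hm (lamv lam S2 a n) (lamv lam S2 b (n+1)))
      by (apply Hm_mono; auto using lamv_pos; lra).
    assert (Hm (lamv lam S1 a (n+3)) (lamv lam S2 b (n+1)) <= Hm (lamv lam S2 a (n+3)) (lamv lam S2 b (n+1)))
      by (apply Hm_mono; auto using lamv_pos; lra).
    apply Rplus_le_compat; apply Rmult_le_compat_l; lra.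
  - apply Hm_mono; auto using lamv_pos; lra.
Qed.

Lemma flux_le (t p1 p2 r gg d : R) : 0 < t -> 0 < gg -> 0 <= r*d*(p1 - p2) ->
  t*p2*r*gg*d <= t*p1*r*gg*d.
Proof.
  intros. assert (0 <= t*gg*(r*d*(p1-p2))) by (apply Rmult_le_pos; [nra|auto]).
  nra.
Qed.

Variables (rho : phase -> R) (g : R).
Hypothesis Hg : 0 < g.

Lemma Gflux_dec_snd S1 S2 l n :
  ~ (0 < dz z n * dz z (n+3)) -> S1 (vx n) = S2 (vx n) ->
  (forall i, lamv lam S1 l i <= lamv lam S2 l i) ->
  (forall i, lamv lam S2 (other l) i <= lamv lam S1 (other l) i) ->
  Gflux z T rho g lam S2 l n <= Gflux z T rho g lam S1 l n.
Proof.
  intros Hn Hf Hl Hm'. unfold Gflux, psi.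
  apply flux_le; [apply Tb_pos; auto | auto |].
  destruct (Rlt_dec 0 ((rho l - rho (other l)) * dz z n)).
  - assert (psi_base z T lam S2 l (other l) n <= psi_base z T lam S1 l (other l) n)
      by (apply pb_mono_snd; auto).
    apply Rmult_le_pos; lra.
  - destruct (Rlt_dec ((rho l - rho (other l)) * dz z n) 0).
    + assert (psi_base z T lam S1 (other l) l n <= psi_base z T lam S2 (other l) l n)
        by (apply pb_mono_snd; auto).
      replace ((rho l - rho (other l)) * dz z n *
        (psi_base z T lam S1 (other l) l n - psi_base z T lam S2 (other l) l n))
       with (- ((rho l - rho (other l)) * dz z n) *
        (psi_base z T lam S2 (other l) l n - psi_base z T lam S1 (other l) l n)) by ring.
      apply Rmult_le_pos; lra.
    + lra.
Qed.

Lemma Gflux_inc_fst S1 S2 l n :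
  ~ (0 < dz z n * dz z (n+1)) -> S1 (vx (n+1)) = S2 (vx (n+1)) ->
  (forall i, lamv lam S1 l i <= lamv lam S2 l i) ->
  (forall i, lamv lam S2 (other l) i <= lamv lam S1 (other l) i) ->
  Gflux z T rho g lam S1 l n <= Gflux z T rho g lam S2 l n.
Proof.
  intros Hn Hf Hl Hm'. unfold Gflux, psi.
  apply flux_le; [apply Tb_pos; auto | auto |].
  destruct (Rlt_dec 0 ((rho l - rho (other l)) * dz z n)).
  - assert (psi_base z T lam S1 l (other l) n <= psi_base z T lam S2 l (other l) n)
      by (apply pb_mono_fst; auto).
    apply Rmult_le_pos; lra.
  - destruct (Rlt_dec ((rho l - rho (other l)) * dz z n) 0).
    + assert (psi_base z T lam S2 (other l) l n <= psi_base z T lam S1 (other l) l n)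
        by (apply pb_mono_fst; auto).
      replace ((rho l - rho (other l)) * dz z n *
        (psi_base z T lam S2 (other l) l n - psi_base z T lam S1 (other l) l n))
       with (- ((rho l - rho (other l)) * dz z n) *
        (psi_base z T lam S1 (other l) l n - psi_base z T lam S2 (other l) l n)) by ring.
      apply Rmult_le_pos; lra.
    + lra.
Qed.
End Mono.

Lemma key (Tk T3 om om' r g dk d3 h1a h1b h2a h2b h3a h3b : R) :
  0 < Tk -> 0 < T3 -> 0 < g -> 0 <= om <= 1 -> 0 <= om' <= 1 ->
  Tk*dk*om = T3*d3*om' -> 0 <= r*dk*(h1b - h1a) -> 0 <= r*d3*(h2a - h2b) ->
  Tk*((1-om)*h1a + om*h3a)*r*g*dk - T3*((1-om')*h2a + om'*h3a)*r*g*d3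
  <= Tk*((1-om)*h1b + om*h3b)*r*g*dk - T3*((1-om')*h2b + om'*h3b)*r*g*d3.
Proof.
  intros.
  assert (E : Tk*((1-om)*h1b + om*h3b)*r*g*dk - T3*((1-om')*h2b + om'*h3b)*r*g*d3
   - (Tk*((1-om)*h1a + om*h3a)*r*g*dk - T3*((1-om')*h2a + om'*h3a)*r*g*d3)
   = Tk*g*(1-om)*(r*dk*(h1b-h1a)) + T3*g*(1-om')*(r*d3*(h2a-h2b))
     + r*g*(h3b-h3a)*(Tk*dk*om - T3*d3*om')) by ring.
  rewrite H4, Rminus_diag, Rmult_0_r, Rplus_0_r in E.
  assert (0 <= Tk*g*(1-om)*(r*dk*(h1b-h1a))) by
    (apply Rmult_le_pos; auto; apply Rmult_le_pos; [nra|lra]).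
  assert (0 <= T3*g*(1-om')*(r*d3*(h2a-h2b))) by
    (apply Rmult_le_pos; auto; apply Rmult_le_pos; [nra|lra]).
  lra.
Qed.

Theorem mainTheorem5
  (z T : nat -> R) (rho : phase -> R) (g : R) (lam : phase -> R -> R)
  (S : nat -> R)
  (Hg : 0 < g)
  (HT : forall k, (k < 4)%nat -> 0 < T k)
  (Hlpos : forall l s, 0 < lam l s)
  (Hlder : forall l, derivable (lam l))
  (Hwmono : forall s1 s2, s1 <= s2 -> lam w s1 <= lam w s2)
  (Hnwmono : forall s1 s2, s1 <= s2 -> lam nw s2 <= lam nw s1)
  (Hz : z 0%nat - z 1%nat + z 2%nat - z 3%nat = 0)
  (l : phase) (k j : nat) (Hk : (k < 4)%nat) (Hj : (j < 4)%nat) (Hjk : j <> k) :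
  exists D : R,
    derivable_pt_lim
      (fun u => Gdiff z T rho g lam (upd S j (satl l u)) l k)
      (satl l (S j)) D
    /\ D <= 0.
Proof.
  set (f := fun u => Gdiff z T rho g lam (upd S j (satl l u)) l k).
  assert (pr : derivable f) by (apply deriv_all; auto).
  assert (Hdec : forall u1 u2, u1 <= u2 -> f u2 <= f u1).
  2:{ exists (derive_pt f (satl l (S j)) (pr (satl l (S j)))). split.
      - apply (derive_pt_eq_1 f _ _ (pr (satl l (S j)))); reflexivity.
      - apply nonpos_derivative_0. exact Hdec. }
  intros u1 u2 Hu. unfold f.
  set (S1 := upd S j (satl l u1)). set (S2 := upd S j (satl l u2)).
  assert (Hf : forall i, vx i <> j -> S1 (vx i) = S2 (vx i)).
  { intros i Hi. unfold S1, S2, upd. rewrite (proj2 (Nat.eqb_neq _ _) Hi). reflexivity. }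
  assert (Hl : forall i, lamv lam S1 l i <= lamv lam S2 l i).
  { intro i. unfold lamv, S1, S2, upd. destruct (Nat.eqb (vx i) j); [|lra].
    destruct l; simpl; [apply Hwmono | apply Hnwmono]; lra. }
  assert (Hm' : forall i, lamv lam S2 (other l) i <= lamv lam S1 (other l) i).
  { intro i. unfold lamv, S1, S2, upd. destruct (Nat.eqb (vx i) j); [|lra].
    destruct l; simpl; [apply Hnwmono | apply Hwmono]; lra. }
  assert (Hvk : vx k <> j) by (rewrite vx_small; auto).
  assert (Ek : forall X, lamv lam S1 X k = lamv lam S2 X k)
    by (intro; unfold lamv; rewrite Hf; auto).
  assert (Ek4 : vx (k+3+1) = vx k) by (replace (k+3+1)%nat with (k+4)%nat by lia; apply vx4).
  assert (Dk4 : dz z (k+3+1) = dz z k) by (replace (k+3+1)%nat with (k+4)%nat by lia; apply dz4).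
  destruct (Rlt_dec 0 (dz z k * dz z (k+3))) as [HB|HA].
  2:{ unfold Gdiff.
      assert (Gflux z T rho g lam S2 l k <= Gflux z T rho g lam S1 l k)
        by (apply Gflux_dec_snd; auto).
      assert (Gflux z T rho g lam S1 l (k+3) <= Gflux z T rho g lam S2 l (k+3)).
      { apply Gflux_inc_fst; auto.
        - rewrite Dk4, Rmult_comm; auto.
        - rewrite Ek4; auto. }
      lra. }
  assert (Hd1 : dz z (k+1) = - dz z (k+3)).
  { destruct k as [|[|[|[|k']]]]; try lia; unfold dz, vx; simpl; lra. }
  assert (Hneg : ~ (0 < dz z k * dz z (k+1))) by (rewrite Hd1; lra).
  assert (pbk : forall S0 X Y, psi_base z T lam S0 X Y k =
     (1 - omegaG z T k) * Hm (lamv lam S0 X k) (lamv lam S0 Y (k+1))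
     + omegaG z T k * Hm (lamv lam S0 X (k+3)) (lamv lam S0 Y (k+1))).
  { intros. unfold psi_base; cbv zeta.
    destruct (Rlt_dec 0 (dz z k * dz z (k+1))); [contradiction|].
    destruct (Rlt_dec 0 (dz z k * dz z (k+3))); [reflexivity|contradiction]. }
  assert (omk : omegaG z T k = phi (Tb T (k+3) * dz z (k+3) / (Tb T k * dz z k))).
  { unfold omegaG.
    destruct (Rlt_dec 0 (dz z k * dz z (k+1))); [contradiction|].
    destruct (Rlt_dec 0 (dz z k * dz z (k+3))); [reflexivity|contradiction]. }
  assert (pb3 : forall S0 X Y, psi_base z T lam S0 X Y (k+3) =
     (1 - omegaG z T (k+3)) * Hm (lamv lam S0 X (k+3)) (lamv lam S0 Y k)
     + omegaG z T (k+3) * Hm (lamv lam S0 X (k+3)) (lamv lam S0 Y (k+1))).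
  { intros. unfold psi_base; cbv zeta.
    replace (k+3+1)%nat with (k+4)%nat by lia.
    replace (k+3+2)%nat with (k+1+4)%nat by lia.
    rewrite !lamv4, dz4.
    destruct (Rlt_dec 0 (dz z (k+3) * dz z k)); [reflexivity|].
    rewrite Rmult_comm in HB; contradiction. }
  assert (om3 : omegaG z T (k+3) = phi (Tb T k * dz z k / (Tb T (k+3) * dz z (k+3)))).
  { unfold omegaG. rewrite Dk4.
    replace (k+3+1)%nat with (k+4)%nat by lia. rewrite Tb4.
    destruct (Rlt_dec 0 (dz z (k+3) * dz z k)); [reflexivity|].
    rewrite Rmult_comm in HB; contradiction. }
  assert (ident : Tb T k * dz z k * omegaG z T k = Tb T (k+3) * dz z (k+3) * omegaG z T (k+3)).
  { rewrite omk, om3. apply phi_sym.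
    pose proof (Tb_pos T k HT). pose proof (Tb_pos T (k+3) HT).
    replace (Tb T k * dz z k * (Tb T (k + 3) * dz z (k + 3)))
      with ((Tb T k * Tb T (k+3)) * (dz z k * dz z (k+3))) by ring.
    apply Rmult_lt_0_compat; auto; apply Rmult_lt_0_compat; auto. }
  pose proof (Tb_pos T k HT). pose proof (Tb_pos T (k+3) HT).
  pose proof (om_range z T k HT). pose proof (om_range z T (k+3) HT).
  set (r := rho l - rho (other l)) in *.
  destruct (Rlt_dec 0 (r * dz z k)) as [P|P].
  - assert (P3 : 0 < r * dz z (k+3)) by nra.
    assert (GE : forall S0, Gflux z T rho g lam S0 l k =
       Tb T k * psi_base z T lam S0 l (other l) k * r * g * dz z k).
    { intro. unfold Gflux, psi. fold r. destruct (Rlt_dec 0 (r * dz z k)); [reflexivity|contradiction]. }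
    assert (GE3 : forall S0, Gflux z T rho g lam S0 l (k+3) =
       Tb T (k+3) * psi_base z T lam S0 l (other l) (k+3) * r * g * dz z (k+3)).
    { intro. unfold Gflux, psi. fold r. destruct (Rlt_dec 0 (r * dz z (k+3))); [reflexivity|contradiction]. }
    unfold Gdiff. rewrite !GE, !GE3, !pbk, !pb3.
    apply key; auto.
    + apply Rmult_le_pos; [lra|]. match goal with |- 0 <= ?a - ?b => cut (b <= a); [lra|] end; apply Hm_mono; auto using lamv_pos.
      rewrite Ek; lra.
    + apply Rmult_le_pos; [lra|]. match goal with |- 0 <= ?a - ?b => cut (b <= a); [lra|] end; apply Hm_mono; auto using lamv_pos.
      rewrite Ek; lra.
  - destruct (Rlt_dec (r * dz z k) 0) as [N|N].
    + assert (N3 : r * dz z (k+3) < 0) by nra.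
      assert (GE : forall S0, Gflux z T rho g lam S0 l k =
         Tb T k * psi_base z T lam S0 (other l) l k * r * g * dz z k).
      { intro. unfold Gflux, psi. fold r. destruct (Rlt_dec 0 (r * dz z k)); [contradiction|].
        destruct (Rlt_dec (r * dz z k) 0); [reflexivity|contradiction]. }
      assert (GE3 : forall S0, Gflux z T rho g lam S0 l (k+3) =
         Tb T (k+3) * psi_base z T lam S0 (other l) l (k+3) * r * g * dz z (k+3)).
      { intro. unfold Gflux, psi. fold r. destruct (Rlt_dec 0 (r * dz z (k+3))); [lra|].
        destruct (Rlt_dec (r * dz z (k+3)) 0); [reflexivity|contradiction]. }
      unfold Gdiff. rewrite !GE, !GE3, !pbk, !pb3.
      apply key; auto.
      * assert (Hm (lamv lam S1 (other l) k) (lamv lam S1 l (k + 1)) <=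
                Hm (lamv lam S2 (other l) k) (lamv lam S2 l (k + 1)))
          by (apply Hm_mono; auto using lamv_pos; rewrite Ek; lra).
        nra.
      * assert (Hm (lamv lam S2 (other l) (k+3)) (lamv lam S2 l k) <=
                Hm (lamv lam S1 (other l) (k+3)) (lamv lam S1 l k))
          by (apply Hm_mono; auto using lamv_pos; rewrite Ek; lra).
        nra.
    + assert (R0 : r = 0).
      { assert (E : r * dz z k = 0) by lra.
        destruct (Rmult_integral _ _ E) as [|E']; [auto|]. rewrite E' in HB; lra. }
      unfold Gdiff, Gflux. fold r. rewrite R0.
      repeat rewrite Rmult_0_r. repeat rewrite Rmult_0_l. lra.
Qed.
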